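(* Let $I$ be an ideal on $\mathbb{N}$ with $\mathrm{Fin}\subseteq I$ and $I\neq\mathrm{Fin}$, and suppose there is an infinite set $C\subseteq\mathbb{N}$ such that every $D\subseteq C$ with $D\in I$ is finite and $\mathbb{N}\setminus C\in I$ (e.g. $C$ witnessing that $I$ has the supset property). Then there exists $(x_n)\in\ell_1^{*}$ such that $A(x_n)$ is a closed interval and $A_I(x_n)$ is meager and Lebesgue null.
   Context: $\ell_1^{*}=\{(x_n)\in\ell_1 : x_n\neq 0\text{ for every }n\}$. An ideal on $\mathbb{N}$ is a family $I\subseteq P(\mathbb{N})$ closed under finite unions and subsets with $\mathbb{N}\notin I$; $\mathrm{Fin}$ is the ideal of finite sets. An ideal is dense if every infinite set has an infinite subset in $I$. For a non-dense ideal $I$ and an infinite $A$ all of whose subsets belonging to $I$ are finite, $I$ has the supset property if there exists $C\supseteq A$ such that every $D\subseteq C$ with $D\in I$ is finite and $\mathbb{N}\setminus C\in I$. $A(x_n)=\{\sum_{n\in A}x_n : A\subseteq\mathbb{N}\}$, $A_I(x_n)=\{\sum_{n\in A}x_n : A\in I\}$. *)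

(* Defs.v *)
From Stdlib Require Import Reals Rtopology.
Open Scope R_scope.

Definition nset := nat -> bool.

Definition nsubset (A B : nset) : Prop := forall n, A n = true -> B n = true.
Definition nunion (A B : nset) : nset := fun n => orb (A n) (B n).
Definition ncompl (A : nset) : nset := fun n => negb (A n).
Definition nfull : nset := fun _ => true.
Definition nfinite (A : nset) : Prop := exists N, forall n, A n = true -> (n < N)%nat.

Definition is_ideal (I : nset -> Prop) : Prop :=
  (forall A B, I A -> I B -> I (nunion A B)) /\
  (forall A B, nsubset B A -> I A -> I B) /\
  ~ I nfull.

Definition in_l1 (x : nat -> R) : Prop :=
  exists l, infinite_sum (fun n => Rabs (x n)) l.
Definition in_l1_star (x : nat -> R) : Prop :=
  in_l1 x /\ forall n, x n <> 0.

Definition subsum_is (x : nat -> R) (A : nset) (s : R) : Prop :=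
  infinite_sum (fun n => if A n then x n else 0) s.

Definition achievement_set (x : nat -> R) : R -> Prop :=
  fun s => exists A : nset, subsum_is x A s.
Definition ideal_achievement_set (I : nset -> Prop) (x : nat -> R) : R -> Prop :=
  fun s => exists A : nset, I A /\ subsum_is x A s.

Definition is_closed_interval (S : R -> Prop) : Prop :=
  exists a b, a <= b /\ forall s, S s <-> a <= s <= b.

Definition nowhere_dense (S : R -> Prop) : Prop :=
  forall y, ~ interior (adherence S) y.
Definition meager (S : R -> Prop) : Prop :=
  exists F : nat -> (R -> Prop),
    (forall k, nowhere_dense (F k)) /\
    (forall s, S s -> exists k, F k s).

Definition lebesgue_null (S : R -> Prop) : Prop :=
  forall eps, 0 < eps ->
    exists a b : nat -> R,
      (forall k, a k <= b k) /\
      (forall s, S s -> exists k, a k < s < b k) /\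
      (forall N, sum_f_R0 (fun k => b k - a k) N <= eps).

(* Main.v *)
Require Import Defs.
From Stdlib Require Import Reals Rtopology ClassicalEpsilon List Lia Lra ZArith Bool Classical FunctionalExtensionality.
Import ListNotations.
Open Scope R_scope.

Definition xs (n:nat) : R := (/2)^(S n).
Definition g (A:nset) (n:nat) : R := if A n then xs n else 0.
Fixpoint ps (A:nset) (n:nat) : R := match n with 0%nat => 0 | S n => ps A n + g A n end.

Lemma h_pos n : 0 < (/2)^n.
Proof. apply pow_lt; lra. Qed.

Lemma g_bounds A n : 0 <= g A n <= (/2)^(S n).
Proof. unfold g, xs. pose proof (h_pos (S n)). destruct (A n); lra. Qed.

Lemma sum_ps A n : sum_f_R0 (g A) n = ps A (S n).
Proof. induction n; simpl in *; [lra|]. rewrite IHn. reflexivity. Qed.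

Lemma lim_bounds f l N0 lo hi : infinite_sum f l ->
  (forall n, (n >= N0)%nat -> lo <= sum_f_R0 f n <= hi) -> lo <= l <= hi.
Proof.
  intros Hs Hb. split.
  - destruct (Rle_dec lo l) as [h|h]; auto. exfalso.
    destruct (Hs (lo - l)) as [N HN]; [lra|].
    specialize (HN (max N N0) ltac:(lia)). specialize (Hb (max N N0) ltac:(lia)).
    unfold Rdist in HN. apply Rabs_def2 in HN. lra.
  - destruct (Rle_dec l hi) as [h|h]; auto. exfalso.
    destruct (Hs (l - hi)) as [N HN]; [lra|].
    specialize (HN (max N N0) ltac:(lia)). specialize (Hb (max N N0) ltac:(lia)).
    unfold Rdist in HN. apply Rabs_def2 in HN. lra.
Qed.

Lemma tail A n k : 0 <= ps A (n+k) - ps A n <= (/2)^n - (/2)^(n+k).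
Proof.
  induction k.
  - rewrite Nat.add_0_r. lra.
  - rewrite Nat.add_succ_r. simpl ps. pose proof (g_bounds A (n+k)).
    simpl in H |- *. lra.
Qed.

Lemma subsum_range A s : subsum_is xs A s -> forall n, 0 <= s - ps A n <= (/2)^n.
Proof.
  intros Hs n.
  assert (ps A n <= s <= ps A n + (/2)^n).
  { apply (lim_bounds _ _ n _ _ Hs). intros m Hm.
    change (fun n0 => if A n0 then xs n0 else 0) with (g A).
    rewrite sum_ps. replace (S m) with (n + (S m - n))%nat by lia.
    pose proof (tail A n (S m - n)). pose proof (h_pos (n + (S m - n))). lra. }
  lra.
Qed.

Lemma conv A s : (forall n, 0 <= s - ps A n <= (/2)^n) -> subsum_is xs A s.
Proof.
  intros H eps He.
  destruct (pow_lt_1_zero (/2) ltac:(rewrite Rabs_pos_eq; lra) eps He) as [N HN].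
  exists N. intros n Hn.
  change (fun n0 => if A n0 then xs n0 else 0) with (g A).
  rewrite sum_ps. unfold Rdist. specialize (HN (S n) ltac:(lia)).
  rewrite Rabs_pos_eq in HN by (left; apply h_pos).
  specialize (H (S n)). rewrite Rabs_minus_sym, Rabs_pos_eq by lra. lra.
Qed.

Lemma ps_full n : ps nfull n = 1 - (/2)^n.
Proof. induction n; simpl; [lra|]. rewrite IHn. unfold g, nfull, xs. simpl. lra. Qed.

Lemma ps_int A n : exists j : Z, ps A n * 2^n = IZR j.
Proof.
  induction n.
  - exists 0%Z. simpl. lra.
  - destruct IHn as [j Hj]. simpl ps.
    assert (E : (/2)^(S n) * 2^(S n) = 1).
    { rewrite <- Rpow_mult_distr, Rinv_l by lra. apply pow1. }
    unfold g, xs. destruct (A n).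
    + exists (2*j+1)%Z. rewrite plus_IZR, mult_IZR.
      replace ((ps A n + (/2)^(S n)) * 2^(S n)) with (2 * (ps A n * 2^n) + (/2)^(S n) * 2^(S n)) by (simpl; ring).
      rewrite Hj, E. simpl. ring.
    + exists (2*j)%Z. rewrite mult_IZR.
      replace ((ps A n + 0) * 2^(S n)) with (2 * (ps A n * 2^n)) by (simpl; ring).
      rewrite Hj. simpl. ring.
Qed.

Fixpoint gp (t:R) (n:nat) : R := match n with 0%nat => 0
  | S n => if Rle_dec (gp t n + xs n) t then gp t n + xs n else gp t n end.
Definition Ag (t:R) : nset := fun n => if Rle_dec (gp t n + xs n) t then true else false.

Lemma ps_Ag t n : ps (Ag t) n = gp t n.
Proof.
  induction n; simpl; auto. rewrite IHn. unfold g, Ag.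
  destruct (Rle_dec (gp t n + xs n) t); lra.
Qed.

Lemma gp_inv t : 0 <= t <= 1 -> forall n, 0 <= t - gp t n <= (/2)^n.
Proof.
  intros Ht n. induction n; simpl; [lra|].
  unfold xs. destruct (Rle_dec (gp t n + (/2)^(S n)) t); simpl in *; lra.
Qed.

Lemma closed_int : is_closed_interval (achievement_set xs).
Proof.
  exists 0, 1. split; [lra|]. intros s. split.
  - intros [A HA]. pose proof (subsum_range A s HA 0). simpl in H. lra.
  - intros Hs. exists (Ag s). apply conv. intros n. rewrite ps_Ag. apply gp_inv; auto.
Qed.

Lemma l1star : in_l1_star xs.
Proof.
  split.
  - exists 1.
    assert (E : (fun n => Rabs (xs n)) = (fun n => if nfull n then xs n else 0)).
    { apply functional_extensionality. intro n. unfold nfull, xs.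
      rewrite Rabs_pos_eq; auto. left; apply h_pos. }
    rewrite E. apply (conv nfull). intros n. rewrite ps_full. pose proof (h_pos n). lra.
  - intros n. pose proof (h_pos (S n)). unfold xs. lra.
Qed.

Definition good (C:nset) (M:nat) (A:nset) : Prop :=
  forall n, (M <= n)%nat -> C n = true -> A n = false.
Definition T (C:nset) (M:nat) (s:R) : Prop := exists A, good C M A /\ subsum_is xs A s.

Lemma h_le1 n : (/2)^n <= 1.
Proof. induction n; simpl; [lra|]. pose proof (h_pos n). lra. Qed.

Lemma pow_mono L c : (L <= c)%nat -> (/2)^c <= (/2)^L.
Proof.
  intros H. replace c with (L + (c - L))%nat by lia. rewrite pow_add.
  pose proof (h_pos L). assert ((/2)^(c-L) <= 1) by apply h_le1.
  pose proof (h_pos (c-L)). nra.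
Qed.

Lemma nd C M : (forall L, exists c, (L <= c)%nat /\ C c = true) -> nowhere_dense (T C M).
Proof.
  intros Cinf y [delta Hd].
  destruct (pow_lt_1_zero (/2) ltac:(rewrite Rabs_pos_eq; lra) delta (cond_pos delta)) as [L HL].
  destruct (Cinf (max L M)) as [c [Hc1 Hc2]].
  set (w := (/2)^c). set (K := 2^c).
  assert (wK : w * K = 1). { unfold w, K. rewrite <- Rpow_mult_distr, Rinv_l by lra. apply pow1. }
  assert (wpos : 0 < w) by apply h_pos.
  assert (wd : w < delta).
  { specialize (HL L (le_n _)). rewrite Rabs_pos_eq in HL by (left; apply h_pos).
    pose proof (pow_mono L c ltac:(lia)). fold w in H. lra. }
  set (r := y * K). set (j0 := (up r - 1)%Z).
  destruct (archimed r) as [A1 A2].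
  assert (J0 : IZR j0 <= r < IZR j0 + 1). { unfold j0. rewrite minus_IZR. simpl. lra. }
  assert (yr : y = r * w). { unfold r. rewrite Rmult_assoc, (Rmult_comm K), wK. ring. }
  set (z := (IZR j0 + 3/4) * w).
  assert (Hz : disc y delta z).
  { unfold disc. rewrite yr. unfold z.
    replace ((IZR j0 + 3/4) * w - r * w) with ((IZR j0 + 3/4 - r) * w) by ring.
    rewrite Rabs_mult, (Rabs_pos_eq w) by lra.
    apply Rle_lt_trans with (1 * w); [|lra]. apply Rmult_le_compat_r; [lra|].
    apply Rabs_le; lra. }
  specialize (Hd z Hz).
  assert (w8 : 0 < w/8) by lra.
  destruct (Hd (disc z (mkposreal _ w8))) as [s [Hs1 Hs2]].
  { exists (mkposreal _ w8). intros u Hu; exact Hu. }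
  destruct Hs2 as [A [HA Hsum]].
  assert (Ac : A c = false) by (apply HA; auto; lia).
  destruct (ps_int A c) as [j Hj]. fold K in Hj.
  assert (Pj : ps A c = IZR j * w).
  { rewrite <- Hj. rewrite Rmult_assoc, (Rmult_comm K), wK. ring. }
  pose proof (subsum_range A s Hsum (S c)) as R1.
  assert (ps A (S c) = ps A c) by (simpl; unfold g; rewrite Ac; ring).
  rewrite H in R1. simpl in R1. fold w in R1. rewrite Pj in R1.
  unfold disc in Hs1. simpl in Hs1. apply Rabs_def2 in Hs1. unfold z in Hs1.
  assert (X1 : (IZR j - IZR j0 - 1/8) * w > 0) by nra.
  assert (X2 : (IZR j0 + 7/8 - IZR j) * w > 0) by nra.
  assert (Y1 : IZR j - IZR j0 - 1/8 > 0) by nra.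
  assert (Y2 : IZR j0 + 7/8 - IZR j > 0) by nra.
  assert (Z1 : (j0 < j)%Z) by (apply lt_IZR; lra).
  assert (Z2 : (j < j0 + 1)%Z) by (apply lt_IZR; rewrite plus_IZR; simpl; lra).
  lia.
Qed.

Fixpoint cov (C:nset) (M L:nat) : list R := match L with
  | 0%nat => [0]
  | S L => if (C L && (M <=? L)%nat)%bool then cov C M L
           else flat_map (fun p => [p; p + (/2)^(S L)]) (cov C M L) end.

Lemma cov_in C M A : good C M A -> forall L, In (ps A L) (cov C M L).
Proof.
  intros HA L. induction L; simpl; [auto|].
  destruct (C L && (M <=? L)%nat)%bool eqn:E.
  - apply andb_true_iff in E as [E1 E2]. apply Nat.leb_le in E2.
    unfold g. rewrite (HA L E2 E1). rewrite Rplus_0_r. auto.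
  - apply in_flat_map. exists (ps A L). split; auto. unfold g, xs.
    destruct (A L); simpl; [right; left|left]; auto; ring.
Qed.

Lemma len_pair (l : list R) c : length (flat_map (fun p => [p; p + c]) l) = (2 * length l)%nat.
Proof. induction l; simpl; auto. rewrite IHl. lia. Qed.

Definition q C M L := INR (length (cov C M L)) * (/2)^L.

Lemma cov_len C M L : (1 <= length (cov C M L))%nat.
Proof. induction L; simpl; auto. destruct (_ && _)%bool; auto. rewrite len_pair. lia. Qed.

Lemma q_step C M L : q C M (S L) = if (C L && (M <=? L)%nat)%bool then q C M L / 2 else q C M L.
Proof.
  unfold q. simpl cov. destruct (_ && _)%bool.
  - simpl. field.
  - rewrite len_pair, mult_INR. simpl. field.
Qed.

Lemma q_nonneg C M L : 0 <= q C M L.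
Proof. unfold q. pose proof (pos_INR (length (cov C M L))). pose proof (h_pos L). nra. Qed.

Lemma q_noninc C M L k : q C M (L + k) <= q C M L.
Proof.
  induction k. rewrite Nat.add_0_r; lra.
  rewrite Nat.add_succ_r, q_step. pose proof (q_nonneg C M (L+k)).
  destruct (_ && _)%bool; lra.
Qed.

Lemma q_small C M : (forall L, exists c, (L <= c)%nat /\ C c = true) ->
  forall r, exists L, q C M L <= (/2)^r.
Proof.
  intros Cinf r. induction r.
  - exists 0%nat. unfold q. simpl. lra.
  - destruct IHr as [L HL]. destruct (Cinf (max L M)) as [c [H1 H2]].
    exists (S c). rewrite q_step. rewrite H2.
    replace (M <=? c)%nat with true by (symmetry; apply Nat.leb_le; lia). simpl.
    pose proof (q_noninc C M L (c - L)). replace (L + (c - L))%nat with c in H by lia.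
    lra.
Qed.

Definition len (e : R * R) := snd e - fst e.
Fixpoint lsum (l : list (R*R)) : R := match l with [] => 0 | e :: l => len e + lsum l end.

Lemma lsum_app l1 l2 : lsum (l1 ++ l2) = lsum l1 + lsum l2.
Proof. induction l1; simpl; lra. Qed.

Lemma lsum_map (l : list R) w : lsum (map (fun p => (p - w, p + 2*w)) l) = INR (length l) * (3*w).
Proof. induction l; simpl lsum; simpl length; [simpl; lra|]. rewrite IHl, S_INR. unfold len; simpl. ring. Qed.

Lemma sum_nth_le (l : list (R*R)) : (forall e, In e l -> fst e <= snd e) ->
  forall N, sum_f_R0 (fun k => len (nth k l (0,0))) N <= lsum l.
Proof.
  induction l; intros H N.
  - simpl. induction N; simpl; [unfold len; simpl; lra|].
    unfold len in *. simpl in *. lra.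
  - assert (Ha : fst a <= snd a) by (apply H; left; auto).
    assert (Hl : forall e, In e l -> fst e <= snd e) by (intros; apply H; right; auto).
    assert (P : 0 <= lsum l).
    { clear -Hl. induction l; simpl; [lra|]. unfold len.
      assert (fst a <= snd a) by (apply Hl; left; auto).
      assert (0 <= lsum l) by (apply IHl; intros; apply Hl; right; auto). lra. }
    destruct N.
    + simpl. unfold len. lra.
    + rewrite decomp_sum by lia. simpl. specialize (IHl Hl N). simpl in IHl. lra.
Qed.

Fixpoint big (Lst : nat -> list (R*R)) (N:nat) : list (R*R) := match N with
  | 0%nat => Lst 0%nat | S N => big Lst N ++ Lst (S N) end.

Section B.
Variable Lst : nat -> list (R*R).
Hypothesis Lne : forall M, (1 <= length (Lst M))%nat.

Lemma big_len N : (S N <= length (big Lst N))%nat.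
Proof. induction N; simpl; auto. rewrite length_app. specialize (Lne (S N)). lia. Qed.

Lemma big_prefix N m : exists rest, big Lst (N + m) = big Lst N ++ rest.
Proof.
  induction m. exists []. rewrite Nat.add_0_r, app_nil_r. auto.
  destruct IHm as [r Hr]. exists (r ++ Lst (S (N+m))). rewrite Nat.add_succ_r. simpl.
  rewrite Hr, app_assoc. auto.
Qed.

Lemma nth_stable N k d : (k < length (big Lst N))%nat -> nth k (big Lst N) d = nth k (big Lst k) d.
Proof.
  intros H. destruct (Nat.le_gt_cases N k).
  - destruct (big_prefix N (k - N)) as [r Hr]. replace (N + (k-N))%nat with k in Hr by lia.
    rewrite Hr, app_nth1; auto.
  - destruct (big_prefix k (N - k)) as [r Hr]. replace (k + (N-k))%nat with N in Hr by lia.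
    rewrite Hr, app_nth1; auto. pose proof (big_len k). lia.
Qed.

Lemma in_big M e : In e (Lst M) -> In e (big Lst M).
Proof. destruct M; simpl; auto. intros; apply in_or_app; right; auto. Qed.

Lemma big_in N e : In e (big Lst N) -> exists M, In e (Lst M).
Proof. induction N; simpl; eauto. intros H; apply in_app_or in H as [H|H]; eauto. Qed.

Lemma lsum_big N : lsum (big Lst N) = sum_f_R0 (fun M => lsum (Lst M)) N.
Proof. induction N; simpl; auto. rewrite lsum_app, IHN. auto. Qed.
End B.

Lemma null_T C : (forall L, exists c, (L <= c)%nat /\ C c = true) ->
  forall eps, 0 < eps -> exists a b : nat -> R,
      (forall k, a k <= b k) /\
      (forall s M, T C M s -> exists k, a k < s < b k) /\
      (forall N, sum_f_R0 (fun k => b k - a k) N <= eps).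
Proof.
  intros Cinf eps He.
  assert (Ex : forall M, exists L, q C M L * 3 <= eps * (/2)^(S M)).
  { intros M. pose proof (h_pos (S M)).
    destruct (pow_lt_1_zero (/2) ltac:(rewrite Rabs_pos_eq; lra) (eps * (/2)^(S M) / 3)) as [r Hr].
    { apply Rdiv_lt_0_compat; nra. }
    destruct (q_small C M Cinf r) as [L HL]. exists L.
    specialize (Hr r (le_n _)). rewrite Rabs_pos_eq in Hr by (left; apply h_pos). lra. }
  set (Lf := fun M => proj1_sig (constructive_indefinite_description _ (Ex M))).
  assert (HLf : forall M, q C M (Lf M) * 3 <= eps * (/2)^(S M)).
  { intros M. unfold Lf. destruct (constructive_indefinite_description _ (Ex M)). auto. }
  set (w := fun M => (/2)^(Lf M)).
  set (Lst := fun M => map (fun p => (p - w M, p + 2 * w M)) (cov C M (Lf M))).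
  assert (Lne : forall M, (1 <= length (Lst M))%nat).
  { intros M. unfold Lst. rewrite length_map. apply cov_len. }
  assert (Lord : forall M e, In e (Lst M) -> fst e <= snd e).
  { intros M e H. unfold Lst in H. apply in_map_iff in H as [p [<- _]]. simpl.
    pose proof (h_pos (Lf M)). unfold w. lra. }
  exists (fun k => fst (nth k (big Lst k) (0,0))), (fun k => snd (nth k (big Lst k) (0,0))).
  split; [|split].
  - intros k. destruct (nth_in_or_default k (big Lst k) (0,0)) as [H|H].
    + apply big_in in H as [M HM]. eauto.
    + rewrite H. simpl. lra.
  - intros s M [A [HA Hs]].
    set (p := ps A (Lf M)).
    assert (Hp : In p (cov C M (Lf M))) by (apply cov_in; auto).
    pose proof (subsum_range A s Hs (Lf M)). fold p in H.
    assert (He1 : In (p - w M, p + 2 * w M) (big Lst M)).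
    { apply in_big. unfold Lst. apply in_map_iff. exists p; auto. }
    destruct (In_nth _ _ (0,0) He1) as [k [Hk1 Hk2]].
    exists k. rewrite <- (nth_stable Lst Lne M k (0,0) Hk1), Hk2. simpl.
    pose proof (h_pos (Lf M)). unfold w. lra.
  - intros N.
    rewrite (sum_eq _ (fun k => len (nth k (big Lst N) (0,0)))).
    2:{ intros i Hi. rewrite (nth_stable Lst Lne N i). unfold len; auto.
        pose proof (big_len Lst Lne N). lia. }
    eapply Rle_trans. apply sum_nth_le.
    { intros e H. apply big_in in H as [M HM]. eauto. }
    rewrite lsum_big.
    assert (forall M, lsum (Lst M) <= eps * (/2)^(S M)).
    { intros M. unfold Lst. rewrite lsum_map. specialize (HLf M). unfold q in HLf. unfold w. lra. }
    assert (forall N, sum_f_R0 (fun M => lsum (Lst M)) N <= eps * (1 - (/2)^(S N))).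
    { induction N0; simpl.
      - specialize (H 0%nat). simpl in H. lra.
      - specialize (H (S N0)). simpl in H, IHN0. lra. }
    specialize (H0 N). pose proof (h_pos (S N)). nra.
Qed.

Theorem mainTheorem15 (I : nset -> Prop) :
  is_ideal I ->
  (forall A, nfinite A -> I A) ->
  (exists A, I A /\ ~ nfinite A) ->
  (exists C : nset,
      ~ nfinite C /\
      (forall D, nsubset D C -> I D -> nfinite D) /\
      I (ncompl C)) ->
  exists x : nat -> R,
    in_l1_star x /\
    is_closed_interval (achievement_set x) /\
    meager (ideal_achievement_set I x) /\
    lebesgue_null (ideal_achievement_set I x).
Proof.
  intros [_ [Isub _]] _ _ [C [Cinf [Csub _]]].
  assert (Cinf' : forall L, exists c, (L <= c)%nat /\ C c = true).
  { intros L. destruct (classic (exists c, (L <= c)%nat /\ C c = true)) as [H|H]; auto.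
    exfalso. apply Cinf. exists L. intros n Hn. destruct (Nat.lt_ge_cases n L); auto.
    exfalso. apply H. eauto. }
  assert (key : forall s, ideal_achievement_set I xs s -> exists M, T C M s).
  { intros s [A [IA Hs]].
    set (D := fun n => (A n && C n)%bool).
    assert (HD : nfinite D).
    { apply Csub. intros n Hn. unfold D in Hn. apply andb_true_iff in Hn. tauto.
      apply (Isub A). intros n Hn. unfold D in Hn. apply andb_true_iff in Hn. tauto. auto. }
    destruct HD as [M HM]. exists M, A. split; auto.
    intros n Hn Cn. destruct (A n) eqn:E; auto.
    assert (D n = true) by (unfold D; rewrite E, Cn; auto). specialize (HM n H). lia. }
  exists xs. split; [apply l1star|]. split; [apply closed_int|]. split.
  - exists (T C). split. intros k; apply nd; auto. auto.
  - intros eps He. destruct (null_T C Cinf' eps He) as [a [b [H1 [H2 H3]]]].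
    exists a, b. split; auto. split; auto. intros s Hs. destruct (key s Hs) as [M HM]. eauto.
Qed.
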